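(* Let $\mathcal{S}$ be a finite state space with non-terminal states $\mathcal{S}_N$ and reward function $r:\mathcal{S}\to\mathbb{R}$ with $r(s)<0$ for $s\in\mathcal{S}_N$, and let $\lambda>0$. Assume there is exactly one start state $s_0$. Let $\mathcal{D}$ be a dataset of transitions $(s,a,r,s')$ collected by an agent starting from $s_0$ and following the default policy $\pi_d$, stored in the order in which they were collected, and let $\mathcal{S}_V$ be the set of states visited in $\mathcal{D}$. Initialize $\mathbf{Z}\in\mathbb{R}^{|\mathcal{S}|\times|\mathcal{S}|}$ as the identity matrix, and learn it by the temporal-difference update: for a transition $(s,a,r,s')$ and for all $j\in\mathcal{S}$, $\mathbf{Z}(s,j)\leftarrow\mathbf{Z}(s,j)+\alpha\,[Y-\mathbf{Z}(s,j)]$, where $Y=\exp(r/\lambda)\big(\mathbb{1}_{\{s=j\}}+\mathbf{Z}(s',j)\big)$ if $s$ is non-terminal and $Y=\exp(r/\lambda)\mathbb{1}_{\{s=j\}}$ if $s$ is terminal, with step size $\alpha\in(0,1)$. Then, after one backward sweep through $\mathcal{D}$ (applying this update to the transitions in reverse order of collection), the top eigenvector (eigenvector of the largest eigenvalue) of $\operatorname{Sym}(\mathbf{Z}_{VV})=(\mathbf{Z}_{VV}+\mathbf{Z}_{VV}^\top)/2$ is positive, where $\mathbf{Z}_{VV}$ is the submatrix of $\mathbf{Z}$ with rows and columns indexed by $\mathcal{S}_V$.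
   Context: The default policy $\pi_d$ assigns nonzero probability to all state-action pairs; $r$ in a transition denotes the reward $r(s)$ received at state $s$. ''Positive'' for an eigenvector means it can be chosen with all entries positive. *)

(* Defs.v *)
From Stdlib Require List.
From HB Require Import structures.
From mathcomp Require Import all_boot all_order all_algebra.
From mathcomp Require Import reals sequences exp.
Set Implicit Arguments. Unset Strict Implicit. Unset Printing Implicit Defensive.
Import Order.TTheory GRing.Theory Num.Theory.
Local Open Scope ring_scope.

(* A transition (s, a, r, s'); the reward r is r(s), the reward received at
   state s, so it is not stored but computed from the reward function. *)
Record transition (S A : Type) := Trans { tr_s : S; tr_a : A; tr_s' : S }.

Section Defs.
Variables (S A : finType) (R : realType).

(* The data-collection relation between consecutive transitions d, e of the
   dataset: either a new episode starts at the (unique) start state s0, or the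
   agent continues from the next state s' of d, which is only possible if the
   state of d is non-terminal (an episode ends at a terminal state). *)
Definition next_ok (s0 : S) (SN : {set S}) (d e : transition S A) : bool :=
  (tr_s e == s0) || ((tr_s d \in SN) && (tr_s e == tr_s' d)).

Definition collected (s0 : S) (SN : {set S}) (P : S -> A -> S -> R)
    (pid : S -> A -> R) (D : seq (transition S A)) : Prop :=
  (forall s a, 0 < pid s a) /\
  (forall s, \sum_(a : A) pid s a = 1) /\
  (forall s a s', 0 <= P s a s') /\
  (forall s a, \sum_(s' : S) P s a s' = 1) /\
  (forall d, List.In d D -> tr_s d \in SN -> 0 < P (tr_s d) (tr_a d) (tr_s' d)) /\
  (if D is d :: _ then tr_s d = s0 else True) /\
  sorted (next_ok s0 SN) D.

Definition visited (SN : {set S}) (D : seq (transition S A)) : {set S} :=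
  [set x | has (fun d => (tr_s d == x) || ((tr_s d \in SN) && (tr_s' d == x))) D].

Definition Zinit : S -> S -> R := fun i j => (i == j)%:R.

Definition td_update (SN : {set S}) (rew : S -> R) (lam alpha : R)
    (d : transition S A) (Z : S -> S -> R) : S -> S -> R :=
  fun i j =>
    if i == tr_s d then
      let Y := if tr_s d \in SN
               then expR (rew (tr_s d) / lam) * ((tr_s d == j)%:R + Z (tr_s' d) j)
               else expR (rew (tr_s d) / lam) * (tr_s d == j)%:R in
      Z i j + alpha * (Y - Z i j)
    else Z i j.

(* One backward sweep: the last collected transition is processed first. *)
Definition backward_sweep (SN : {set S}) (rew : S -> R) (lam alpha : R)
    (D : seq (transition S A)) : S -> S -> R :=
  foldr (td_update SN rew lam alpha) Zinit D.

(* Submatrix with rows and columns indexed by V (in the enumeration order of V). *)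
Definition submx_VV (V : {set S}) (Z : S -> S -> R) : 'M[R]_#|V| :=
  \matrix_(i < #|V|, j < #|V|) Z (enum_val i) (enum_val j).

End Defs.

Definition Sym (R : fieldType) n (M : 'M[R]_n) : 'M[R]_n := (2%:R)^-1 *: (M + M^T).

(* mu is the largest eigenvalue of M (mathcomp's eigenvalue: row-vector convention). *)
Definition top_eigenvalue (R : realFieldType) n (M : 'M[R]_n) (mu : R) : Prop :=
  eigenvalue M mu /\ forall nu, eigenvalue M nu -> nu <= mu.

(* An eigenvector is positive if it can be chosen (rescaled) with all entries positive. *)
Definition positive_vec (R : realFieldType) n (v : 'rV[R]_n) : Prop :=
  exists c : R, forall i, 0 < c * v 0 i.

(* Main.v *)
From HB Require Import structures.
From mathcomp Require Import all_boot all_order all_algebra.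
From mathcomp Require Import reals sequences exp.
From mathcomp Require Import lra ring.
From mathcomp Require Import classical_sets.
Require Import Defs.
Import Order.TTheory GRing.Theory Num.Theory.
Local Open Scope classical_set_scope.
Local Open Scope ring_scope.

Section Abs.
Variable R : realType.

Lemma cs_real (a b c : R) : 0 <= c -> (forall t, 0 <= a + 2*t*b + t^+2*c) -> b^+2 <= a*c.
Proof.
move=> c0 H.
have a0 : 0 <= a by have := H 0; rewrite expr0n /= !(mul0r, mulr0, addr0).
case: (ltrgtP c 0) c0 => // [cp _|c0' _].
  have := H (-(b/c)).
  have -> : a + 2 * - (b / c) * b + (- (b / c)) ^+ 2 * c = (a*c - b^+2)/c.
    by field; rewrite gt_eqF.
  by rewrite pmulr_lge0 ?invr_gt0 // subr_ge0.
rewrite c0'; case: (eqVneq b 0) => [->|bn0]; first by rewrite expr0n /= mulr0.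
have := H (-(a+1)/(2*b)).
have -> : a + 2 * (- (a + 1) / (2 * b)) * b + (- (a + 1) / (2 * b)) ^+ 2 * c = -1.
  rewrite c0';
  by field.
move=> h; have : (0:R) < 1 by []. lra.
Qed.
End Abs.

Section Mx.
Variables (R : realType) (n : nat).
Implicit Types (B M N : 'M[R]_n) (x y z u v w : 'rV[R]_n).

Definition qf B x y : R := (x *m B *m y^T) 0 0.
Definition nrm y : R := (y *m y^T) 0 0.

Lemma qfE B x y : qf B x y = \sum_i \sum_j x 0 i * B i j * y 0 j.
Proof.
rewrite /qf mxE (eq_bigr (fun j => \sum_i x 0 i * B i j * y 0 j)); last first.
  by move=> j _; rewrite !mxE mulr_suml; apply: eq_bigr => i _.
exact: exchange_big.
Qed.

Lemma nrmE y : nrm y = \sum_i y 0 i ^+ 2.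
Proof. by rewrite /nrm mxE; apply: eq_bigr => i _; rewrite mxE expr2. Qed.

Lemma nrm_ge0 y : 0 <= nrm y.
Proof. by rewrite nrmE sumr_ge0 // => i _; rewrite sqr_ge0. Qed.

Lemma nrm_eq0 y : nrm y = 0 -> y = 0.
Proof.
rewrite nrmE => H; apply/rowP => i; rewrite mxE.
apply/eqP; rewrite -sqrf_eq0; apply/eqP; apply: (psumr_eq0P _ H) => // j _.
exact: sqr_ge0.
Qed.

Lemma nrm_gt0 y : y != 0 -> 0 < nrm y.
Proof.
move=> y0; rewrite lt_neqAle nrm_ge0 andbT eq_sym; apply/eqP => /nrm_eq0 h.
by rewrite h eqxx in y0.
Qed.

Lemma sq_le_nrm y i : y 0 i ^+ 2 <= nrm y.
Proof.
rewrite nrmE (bigD1 i) //= lerDl sumr_ge0 // => j _; exact: sqr_ge0.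
Qed.

Lemma qf_sym B x y : B^T = B -> qf B y x = qf B x y.
Proof.
move=> sB; rewrite !qfE exchange_big /=; apply: eq_bigr => i _.
apply: eq_bigr => j _; rewrite -{1}sB mxE; lra.
Qed.

Lemma qf_lin B x y t : B^T = B ->
  qf B (x + t *: y) (x + t *: y) = qf B x x + 2 * t * qf B x y + t ^+ 2 * qf B y y.
Proof.
move=> sB; have := qf_sym B x y sB; rewrite /qf.
rewrite linearD linearZ /= !(mulmxDl, mulmxDr) -!scalemxAl -!scalemxAr !mxE => ->.
ring.
Qed.

Lemma qf_bound N y : qf N y y <= (\sum_i \sum_j `|N i j|) * nrm y.
Proof.
rewrite qfE mulr_suml; apply: ler_sum => i _; rewrite mulr_suml; apply: ler_sum => j _.
apply: le_trans (ler_norm _) _; rewrite !normrM [_ * `|N i j|]mulrC -mulrA.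
apply: ler_wpM2l => //.
have hi := sq_le_nrm y i; have hj := sq_le_nrm y j.
rewrite -(real_normK (num_real (y 0 i))) in hi.
rewrite -(real_normK (num_real (y 0 j))) in hj.
have := normr_ge0 (y 0 i); have := normr_ge0 (y 0 j).
move: (`|y 0 i|) (`|y 0 j|) hi hj => p q hp hq p0 q0; nra.
Qed.

Lemma psd_zero B u : B^T = B -> (forall z, 0 <= qf B z z) -> qf B u u = 0 -> u *m B = 0.
Proof.
move=> sB psd u0; set y := u *m B.
have : (qf B u y) ^+ 2 <= 0 * qf B y y.
  by apply: cs_real => // t; have := psd (u + t *: y); rewrite qf_lin // u0.
have -> : qf B u y = nrm y by [].
rewrite mul0r => h; apply: nrm_eq0; apply/eqP; rewrite -sqrf_eq0 eq_le h sqr_ge0 //.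
Qed.


Inductive reach M (r : 'I_n) : 'I_n -> Prop :=
| reach0 : reach M r r
| reachS i j : reach M r i -> 0 < M i j -> reach M r j.

Lemma zero_step M (mu : R) w i j : (forall a b, 0 <= M a b) -> (forall k, 0 <= w 0 k) ->
  w *m M = mu *: w -> w 0 i = 0 -> 0 < M j i -> w 0 j = 0.
Proof.
move=> M0 w0 eM wi Mji.
have : (w *m M) 0 i = 0 by rewrite eM mxE wi mulr0.
rewrite mxE => hs.
have := psumr_eq0P (fun k _ => mulr_ge0 (w0 k) (M0 k i)) hs (i:=j) isT.
by move/eqP; rewrite mulf_eq0 (gt_eqF Mji) orbF => /eqP.
Qed.

Arguments zero_step {M mu w i j}.

Lemma propagate M (mu : R) r w : M^T = M -> (forall a b, 0 <= M a b) ->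
  (forall i, reach M r i) -> (forall k, 0 <= w 0 k) ->
  w *m M = mu *: w -> forall i, w 0 i = 0 -> w = 0.
Proof.
move=> sM M0 hr w0 eM i wi.
have sMe a b : M a b = M b a by rewrite -{1}sM mxE.
have wr : w 0 r = 0.
  elim: (hr i) wi => // a b _ IH Mab wb; apply: IH.
  exact: (zero_step M0 w0 eM wb Mab).
apply/rowP => j; rewrite mxE; elim: (hr j) => // a b _ IH Mab.
by apply: (zero_step M0 w0 eM IH); rewrite sMe.
Qed.

Arguments psd_zero {B u}.
Arguments propagate {M mu r w}.

Lemma qf_shift M (mu : R) x y : qf (mu%:M - M) x y = mu * (x *m y^T) 0 0 - qf M x y.
Proof.
by rewrite /qf mulmxBr mul_mx_scalar mulmxBl -scalemxAl !mxE.
Qed.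


Lemma perron M r : M^T = M -> (forall a b, 0 <= M a b) -> (forall i, reach M r i) ->
  exists mu : R, top_eigenvalue M mu /\
    forall v : 'rV[R]_n, v != 0 -> v *m M = mu *: v -> positive_vec v.
Proof.
move=> sM M0 hr.
pose K := \sum_i \sum_j `|M i j|.
pose E : set R := fun q => exists2 y : 'rV[R]_n, y != 0 & q = qf M y y / nrm y.
have one0 : (const_mx 1 : 'rV[R]_n) != 0.
  by apply/eqP => /rowP /(_ r); rewrite !mxE; apply/eqP; exact: oner_neq0.
have En : E !=set0.
  by exists (qf M (const_mx 1) (const_mx 1) / nrm (const_mx 1)); exists (const_mx 1).
have Eub : ubound E K.
  by move=> q [y y0 ->]; rewrite ler_pdivrMr ?nrm_gt0 //; exact: qf_bound.
have Ehub : has_ubound E by exists K.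
set mu := sup E.
have Hub y : qf M y y <= mu * nrm y.
  case: (eqVneq y 0) => [->|y0].
    by rewrite /qf /nrm !mul0mx !mxE mulr0.
  have := ub_le_sup Ehub; move/(_ (qf M y y / nrm y)).
  by rewrite ler_pdivrMr ?nrm_gt0 //; apply; exists y.
pose B := mu%:M - M.
have sB : B^T = B by rewrite /B linearB /= tr_scalar_mx sM.
have qB y : qf B y y = mu * nrm y - qf M y y by exact: qf_shift.
have psd z : 0 <= qf B z z by rewrite qB subr_ge0 Hub.
have [w w0 wM] : exists2 w : 'rV_n, w != 0 & w *m M = mu *: w.
  case: (boolP (eigenvalue M mu)) => [/eigenvalueP[w wM w0]|nE]; first by exists w.
  exfalso.
  have uA : (M - mu%:M) \in unitmx.
    by rewrite -row_free_unit -kermx_eq0; move: nE; rewrite /eigenvalue /eigenspace negbK.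
  pose N := - (invmx (M - mu%:M))^T.
  pose K' := \sum_i \sum_j `|N i j|.
  have K'0 : 0 <= K' by apply: sumr_ge0 => i _; apply: sumr_ge0 => j _.
  have ik : 0 < (K' + 1)^-1 by rewrite invr_gt0; lra.
  suff : mu <= mu - (K' + 1)^-1 by lra.
  apply: ge_sup En _ => q [y y0 ->].
  pose x := - (y *m invmx (M - mu%:M)).
  have xB : x *m B = y by rewrite /x /B mulNmx -mulmxN opprB mulmxKV.
  have hb : qf B x y = nrm y by rewrite /qf xB.
  have ha : qf B x x = qf N y y.
    by rewrite /qf xB /x /N linearN /= trmx_mul !mulmxN ?mulNmx mulmxA.
  have cs : qf B x y ^+ 2 <= qf B x x * qf B y y.
    by apply: cs_real (psd y) _ => t; rewrite -qf_lin.
  rewrite hb ha in cs.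
  have hN := qf_bound N y.
  have ny0 := nrm_gt0 y y0.
  have hc := psd y.
  have h1 : nrm y <= K' * qf B y y.
    move: (nrm y) (qf N y y) (qf B y y) ny0 hN cs hc => a b c; rewrite -/K' => *; nra.
  rewrite ler_pdivrMr //.
  have h2 : nrm y * (K' + 1)^-1 <= qf B y y.
    rewrite ler_pdivrMr; last lra.
    by move: (nrm y) (qf B y y) h1 hc ny0 => a c *; nra.
  move: h2; rewrite qB mulrBl; lra.
have qscal z (nu : R) : z *m M = nu *: z -> qf M z z = nu * nrm z.
  by move=> zM; rewrite /qf zM -scalemxAl mxE.
exists mu; split.
  split; first by apply/eigenvalueP; exists w.
  move=> nu /eigenvalueP [z zM z0].
  have := Hub z; rewrite (qscal _ _ zM) ler_pM2r //; exact: nrm_gt0.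
move=> v v0 vM.
pose u := \row_i `|v 0 i|.
have nu : nrm u = nrm v.
  by rewrite !nrmE; apply: eq_bigr => i _; rewrite mxE real_normK ?num_real.
have quv : qf M v v <= qf M u u.
  rewrite !qfE; apply: ler_sum => i _; apply: ler_sum => j _; rewrite !mxE.
  apply: le_trans (ler_norm _) _; rewrite !normrM (ger0_norm (M0 i j)) //.
have qBu : qf B u u = 0.
  apply/eqP; rewrite eq_le psd andbT qB subr_le0 nu -(qscal _ _ vM) //.
have uM : u *m M = mu *: u.
  have := psd_zero sB psd qBu; rewrite /B mulmxBr mul_mx_scalar => /eqP.
  by rewrite subr_eq0 => /eqP <-.
have u0 k : 0 <= u 0 k by rewrite mxE.
have unz i : v 0 i != 0.
  apply/eqP => vi.
  have u_0 : u = 0 by apply: (propagate sM M0 hr u0 uM i); rewrite mxE vi normr0.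
  move/eqP: v0; apply; apply/rowP => k.
  have := congr1 (fun m : 'rV_n => m 0 k) u_0; rewrite !mxE => /eqP.
  by rewrite normr_eq0 => /eqP.
pose w' := v + u.
have wM' : w' *m M = mu *: w' by rewrite mulmxDl vM uM scalerDr.
have w0' k : 0 <= w' 0 k.
  by rewrite !mxE; have := ler_norm (- v 0 k); rewrite normrN; lra.
case: (eqVneq w' 0) => [w_0|wn0].
  exists (-1) => i; have := congr1 (fun m : 'rV_n => m 0 i) w_0; rewrite !mxE => h.
  have := unz i; case: (ltrgtP (v 0 i) 0) => [vl|vg|ve]; last by [].
  - move=> _; lra.
  - by move: h; rewrite ger0_norm ?ltW //; lra.
exists 1 => i.
have wi : w' 0 i != 0.
  by apply/eqP => wi; move/eqP: wn0; apply; apply: (propagate sM M0 hr w0' wM' i wi).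
move: wi; rewrite !mxE; have := unz i; case: (ltrgtP (v 0 i) 0) => [vl|vg|ve]; last by [].
  by rewrite ltr0_norm // subrr eqxx.
move=> _ _; lra.
Qed.

End Mx.
Arguments reach {R n} M r _.
Arguments reachS {R n M r i j}.

Lemma In_has (T : Type) (p : pred T) (L : seq T) d : List.In d L -> p d -> has p L.
Proof. elim: L => //= e L IH [<- ->|/IH h pd]; [by [] | by rewrite h ?orbT]. Qed.

Lemma has_In (T : Type) (p : pred T) (L : seq T) : has p L -> exists d, List.In d L /\ p d.
Proof.
elim: L => //= e L IH /orP [pe|/IH [d [dL pd]]]; first by exists e; split; [left|].
by exists d; split; [right|].
Qed.

Lemma path_all (T : Type) (e : rel T) (Q : T -> Prop) x L :
  (forall d f, List.In d (x :: L) -> e d f -> Q d -> Q f) ->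
  Q x -> path e x L -> forall f, List.In f L -> Q f.
Proof.
elim: L x => //= y L IH x step Qx /andP [exy pyL].
have Qy : Q y by apply: (step x) => //; left.
move=> f [<-|fL] //; apply: (IH y) => // d g dL; apply: step; right; exact: dL.
Qed.

Section Conc.
Variables (S A : finType) (R : realType) (SN : {set S}) (rew : S -> R) (lam alpha : R).

Let upd := td_update (A:=A) SN rew lam alpha.
Let Zof (L : seq (transition S A)) := foldr upd (@Zinit S R) L.

Lemma upd_val d (Z : S -> S -> R) i j : upd d Z i j =
  if i == tr_s d then (1 - alpha) * Z i j + alpha *
     (if tr_s d \in SN then expR (rew (tr_s d) / lam) * ((tr_s d == j)%:R + Z (tr_s' d) j)
      else expR (rew (tr_s d) / lam) * (tr_s d == j)%:R)
  else Z i j.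
Proof. rewrite /upd /td_update; case: (i == tr_s d) => //=; ring. Qed.

Lemma Zof_props (a0 : 0 < alpha < 1) L :
  (forall i j, 0 <= Zof L i j) /\ (forall i, 0 < Zof L i i).
Proof.
case/andP: a0 => a0 a1.
elim: L => [|d L [IH1 IH2]] /=.
  by split => [i j|i]; rewrite /Zof /= /Zinit ?eqxx ?ler0n.
have Y0 j : 0 <= (if tr_s d \in SN then expR (rew (tr_s d) / lam) * ((tr_s d == j)%:R + Zof L (tr_s' d) j)
      else expR (rew (tr_s d) / lam) * (tr_s d == j)%:R).
  case: ifP => _; apply: mulr_ge0; rewrite ?expR_ge0 ?addr_ge0 ?ler0n //.
split => [i j|i]; rewrite /Zof /= -/(Zof L) upd_val; case: ifP => // _.
  by apply: addr_ge0; apply: mulr_ge0; [lra | exact: IH1 | exact: ltW | exact: Y0].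
apply: ltr_wpDr; first by apply: mulr_ge0; [exact: ltW|exact: Y0].
apply: mulr_gt0 => //; lra.
Qed.

Lemma upd_pos (a0 : 0 < alpha < 1) d (Z : S -> S -> R) i j :
  (forall i j, 0 <= Z i j) -> 0 < Z i j -> 0 < upd d Z i j.
Proof.
case/andP: a0 => a0 a1 Z0 Zp; rewrite upd_val; case: ifP => // _.
apply: ltr_wpDr.
  apply: mulr_ge0; first exact: ltW.
  case: ifP => _; apply: mulr_ge0; rewrite ?expR_ge0 ?addr_ge0 ?ler0n //.
apply: mulr_gt0 => //; lra.
Qed.

Lemma edge_pos (a0 : 0 < alpha < 1) L d : List.In d L -> tr_s d \in SN ->
  0 < Zof L (tr_s d) (tr_s' d).
Proof.
elim: L => //= e L IH [<-|dL] dSN; rewrite -/(Zof L).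
  have [Z0 Zd] := Zof_props a0 L; case/andP: a0 => a0 a1.
  rewrite upd_val eqxx dSN.
  apply: ltr_wpDl; first by apply: mulr_ge0; [lra|exact: Z0].
  apply: mulr_gt0 => //; apply: mulr_gt0; first exact: expR_gt0.
  by apply: ltr_wpDl; [exact: ler0n | exact: Zd].
apply: upd_pos => //; last exact: IH.
by case: (Zof_props a0 L).
Qed.

End Conc.

Theorem propositionC3 (S A : finType) (R : realType)
    (SN : {set S}) (rew : S -> R) (lam alpha : R) (s0 : S)
    (P : S -> A -> S -> R) (pid : S -> A -> R) (D : seq (transition S A)) :
  (forall s, s \in SN -> rew s < 0) ->
  0 < lam ->
  0 < alpha < 1 ->
  collected s0 SN P pid D ->
  (0 < size D)%N ->
  let V := visited SN D in
  let M := Sym (submx_VV V (backward_sweep SN rew lam alpha D)) in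
  exists mu : R, top_eigenvalue M mu /\
    forall v : 'rV[R]_#|V|, v != 0 -> v *m M = mu *: v -> positive_vec v.
Proof.
move=> _ _ a0 [_ [_ [_ [_ [HP [Hhd Hsort]]]]]] Dpos.
destruct D as [|d0 D']; first by [].
move=> V M.
set Z := backward_sweep SN rew lam alpha (d0 :: D').
have [Z0 Zd] := Zof_props S A R SN rew lam alpha a0 (d0 :: D').
have Zpos d : List.In d (d0 :: D') -> tr_s d \in SN -> 0 < Z (tr_s d) (tr_s' d).
  exact: (edge_pos S A R SN rew lam alpha a0).
have s0V : s0 \in V.
  by rewrite /V /visited inE; apply: (In_has _ _ _ d0); [left | rewrite Hhd eqxx].
pose r := enum_rank_in s0V s0.
apply: (@perron _ _ _ r).
- by rewrite /M /Sym linearZ /= linearD /= trmxK addrC.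
- move=> i j; rewrite /M /Sym !mxE; apply: mulr_ge0.
    by rewrite invr_ge0 ler0n.
  by apply: addr_ge0; apply: Z0.
pose Pst x := x \in V /\ reach M r (enum_rank_in s0V x).
have Mpos x y : x \in V -> y \in V -> 0 < Z x y ->
    0 < M (enum_rank_in s0V x) (enum_rank_in s0V y).
  move=> xV yV Zxy; rewrite /M /Sym !mxE !enum_rankK_in //.
  apply: mulr_gt0; first by rewrite invr_gt0 ltr0n.
  by apply: ltr_wpDr => //; apply: Z0.
have Hedge d : List.In d (d0 :: D') -> tr_s d \in SN -> Pst (tr_s d) -> Pst (tr_s' d).
  move=> dD dSN [xV xr].
  have yV : tr_s' d \in V.
    by rewrite /V /visited inE; apply: (In_has _ _ _ d) => //; rewrite dSN eqxx orbT.
  split => //; apply: reachS xr _; exact: Mpos (Zpos d dD dSN).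
have Hall d : List.In d (d0 :: D') -> Pst (tr_s d).
  have P0 : Pst s0 by split => //; exact: reach0.
  move=> [<-|dD]; first by rewrite Hhd.
  apply: (path_all _ (next_ok s0 SN) (fun d => Pst (tr_s d)) d0 D') => //.
  - move=> d1 f d1D /orP [/eqP -> //|/andP [dSN /eqP ->]].
    exact: Hedge.
  - by rewrite Hhd.
move=> i; rewrite -(enum_valK_in s0V i).
have := enum_valP i; rewrite /V /visited inE => /has_In [d [dD /orP [/eqP <-|/andP [dSN /eqP <-]]]].
  by case: (Hall d dD).
by case: (Hedge d dD dSN (Hall d dD)).
Qed.
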